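(* Let $g(x)=(x+1)\ln(x+1)-x\ln x$. For $\eta\in[0,1)$, $N_S>0$ and $\lambda\in(0,1]$ with $\lambda(1-\eta)N_S\ge 2$, \[ \big[g(N_S)+g(\eta N_S)-g((1-\eta)N_S)\big]-\big[g(\lambda N_S)+g(\eta N_S)-g((1-\eta)\lambda N_S)\big]\le \frac{5}{6\lambda N_S(1-\eta)} . \] Consequently, for $\epsilon>0$, choosing $\lambda=5/[6\epsilon N_S(1-\eta)\ln 2]$, whenever $\lambda(1-\eta)N_S\ge2$, makes the limited-entanglement classical rate $g_2(\lambda N_S)+g_2(\eta N_S)-g_2((1-\eta)\lambda N_S)$ within $\epsilon$ bits of the entanglement-assisted classical capacity $g_2(N_S)+g_2(\eta N_S)-g_2((1-\eta)N_S)$, where $g_2(x)=(x+1)\log_2(x+1)-x\log_2 x$.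
   Context: These quantities refer to a pure-loss bosonic channel with transmissivity $\eta$ and mean input photon number constraint $N_S$: $g(N_S)+g(\eta N_S)-g((1-\eta)N_S)$ is its entanglement-assisted classical capacity, and $g(\lambda N_S)+g(\eta N_S)-g((1-\eta)\lambda N_S)$ is the classical rate achievable by a trade-off code dedicating a fraction $\lambda$ of the photons to shared entanglement. *)

(* Defs.v *)
From Stdlib Require Import Reals.
Open Scope R_scope.

(* g(x) = (x+1) ln(x+1) - x ln x  (natural log).  Stdlib's ln is total with
   ln 0 = 0, so g 0 = 0, matching the convention 0 ln 0 = 0. *)
Definition g (x : R) : R := (x + 1) * ln (x + 1) - x * ln x.

Definition log2 (x : R) : R := ln x / ln 2.
Definition g2 (x : R) : R := (x + 1) * log2 (x + 1) - x * log2 x.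

Definition EA_capacity (gf : R -> R) (eta NS : R) : R :=
  gf NS + gf (eta * NS) - gf ((1 - eta) * NS).

(* rate of the trade-off code using a fraction lambda of photons for entanglement *)
Definition tradeoff_rate (gf : R -> R) (eta NS lambda : R) : R :=
  gf (lambda * NS) + gf (eta * NS) - gf ((1 - eta) * lambda * NS).

(* Main.v *)
Require Import Defs.
From Stdlib Require Import Reals Lra.
From Coquelicot Require Import Coquelicot.
Open Scope R_scope.

Lemma mono (f df : R -> R) a b : a <= b ->
  (forall x, a <= x <= b -> is_derive f x (df x)) ->
  (forall x, a <= x <= b -> 0 <= df x) -> f a <= f b.
Proof.
  intros Hab Hd Hp.
  destruct (Req_dec a b) as [->|Hne]; [lra|].
  destruct (MVT_gen f a b df) as [c [Hc Heq]].
  - intros x Hx. apply Hd. rewrite Rmin_left in Hx by lra. rewrite Rmax_right in Hx by lra. lra.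
  - intros x Hx. rewrite Rmin_left in Hx by lra. rewrite Rmax_right in Hx by lra.
    apply continuity_pt_filterlim. apply (ex_derive_continuous (K:=R_AbsRing) (V:=R_NormedModule)).
    exists (df x). apply Hd; lra.
  - rewrite Rmin_left in Hc by lra. rewrite Rmax_right in Hc by lra.
    assert (0 <= df c * (b - a)) by (apply Rmult_le_pos; [apply Hp; lra|lra]). lra.
Qed.

Lemma ln_lo2 u : 0 <= u -> u - u^2/2 <= ln (1+u).
Proof.
  intros Hu.
  assert (H := mono (fun s => ln (1+s) - s + s^2/2) (fun s => s^2/(1+s)) 0 u Hu).
  cbv beta in H. rewrite Rplus_0_r, ln_1 in H.
  assert (0 <= u^2/(1+u) -> True) by auto.
  enough (ln (1+u) - u + u^2/2 >= 0) by lra.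
  assert (0 - 0 + 0 ^ 2 / 2 = 0) as E by field. rewrite E in H.
  apply Rle_ge, H.
  - intros x Hx. auto_derive; [lra|]. field. lra.
  - intros x Hx. apply Rdiv_le_0_compat; [nra|lra].
Qed.

Lemma ln_up3 u : 0 <= u -> ln (1+u) <= u - u^2/2 + u^3/3.
Proof.
  intros Hu.
  assert (H := mono (fun s => s - s^2/2 + s^3/3 - ln (1+s)) (fun s => s^3/(1+s)) 0 u Hu).
  cbv beta in H. rewrite Rplus_0_r, ln_1 in H.
  enough (u - u^2/2 + u^3/3 - ln (1+u) >= 0) by lra.
  assert (0 - 0 ^ 2 / 2 + 0 ^ 3 / 3 - 0 = 0) as E by field. rewrite E in H.
  apply Rle_ge, H.
  - intros x Hx. auto_derive; [lra|]. field. lra.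
  - intros x Hx. apply Rdiv_le_0_compat; [|lra]. apply pow_le. lra.
Qed.

Lemma ln_lo1 y : 0 <= y -> y/(1+y) <= ln (1+y).
Proof.
  intros Hy.
  assert (H := mono (fun s => ln (1+s) - s/(1+s)) (fun s => s/(1+s)^2) 0 y Hy).
  cbv beta in H. rewrite Rplus_0_r, ln_1 in H.
  assert (0 - 0/1 = 0) as E by field. rewrite E in H.
  enough (0 <= ln (1+y) - y/(1+y)) by lra.
  apply H.
  - intros x Hx. auto_derive; [lra|]. field. lra.
  - intros x Hx. apply Rdiv_le_0_compat; [lra|]. apply pow_lt. lra.
Qed.

Lemma r_decr y1 y2 : 0 < y1 <= y2 -> ln (1+y2)/y2 <= ln (1+y1)/y1.
Proof.
  intros Hy.
  assert (H := mono (fun s => - (ln (1+s)/s)) (fun s => (ln (1+s) - s/(1+s))/s^2) y1 y2 (proj2 Hy)).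
  cbv beta in H.
  enough (- (ln (1 + y1) / y1) <= - (ln (1 + y2) / y2)) by lra.
  apply H.
  - intros x Hx. auto_derive; [lra|]. field. lra.
  - intros x Hx. apply Rdiv_le_0_compat.
    + assert (H1 := ln_lo1 x). lra.
    + apply pow_lt. lra.
Qed.

Lemma lnd t : 0 < t -> ln (t+1) - ln t = ln (1 + /t).
Proof. intros. rewrite <- ln_div by lra. f_equal. field. lra. Qed.

Definition hh a t := g t - g (a*t).

Lemma hh_der a t : 0 < a -> 0 < t ->
  is_derive (hh a) t ((ln(t+1)-ln t) - a*(ln(a*t+1) - ln(a*t))).
Proof.
  intros Ha Ht. unfold hh, g. auto_derive.
  - repeat split; nra.
  - field. nra.
Qed.

Lemma core_up a x N : 0 < a <= 1 -> 2 <= a*x -> x <= N ->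
  hh a N - hh a x <= /(2*a*x) + /(6*x^2).
Proof.
  intros Ha Hax HxN.
  assert (Hx : 2 <= x) by nra.
  set (dh := fun t => (ln(t+1)-ln t) - a*(ln(a*t+1) - ln(a*t))).
  assert (H := mono (fun t => -(hh a t + /(2*a*t) + /(6*t^2)))
     (fun t => -(dh t + - /(2*a*t^2) + - /(3*t^3))) x N HxN).
  cbv beta in H.
  assert (0 < /(2*a*N)) by (apply Rinv_0_lt_compat; nra).
  assert (0 < /(6*N^2)) by (apply Rinv_0_lt_compat; nra).
  enough (-(hh a x + /(2*a*x) + /(6*x^2)) <= -(hh a N + /(2*a*N) + /(6*N^2))) by lra.
  apply H.
  - intros t Ht. unfold hh, g, dh. auto_derive.
    + repeat split; nra.
    + field. nra.
  - intros t Ht. unfold dh.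
    assert (Ht0 : 0 < t) by lra.
    rewrite (lnd t) by lra. rewrite (lnd (a*t)) by nra.
    set (u := /t).
    assert (Hu : 0 < u) by (apply Rinv_0_lt_compat; lra).
    assert (E1 : /(a*t) = u/a) by (unfold u; field; lra).
    assert (E2 : /(2*a*t^2) = u^2/(2*a)) by (unfold u; field; lra).
    assert (E3 : /(3*t^3) = u^3/3) by (unfold u; field; lra).
    rewrite E1, E2, E3.
    assert (A := ln_up3 u (Rlt_le _ _ Hu)).
    assert (B := ln_lo2 (u/a) (Rlt_le _ _ (Rdiv_lt_0_compat _ _ Hu (proj1 Ha)))).
    assert (B' : a * (u/a - (u/a)^2/2) <= a * ln (1 + u/a)) by (apply Rmult_le_compat_l; lra).
    assert (E4 : a * (u/a - (u/a)^2/2) = u - u^2/(2*a)) by (field; lra).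
    rewrite E4 in B'. nra.
Qed.

Lemma core_lo a x N : 0 < a <= 1 -> 0 < x -> x <= N -> hh a x <= hh a N.
Proof.
  intros Ha Hx HxN.
  apply (mono _ (fun t => (ln(t+1)-ln t) - a*(ln(a*t+1) - ln(a*t))) x N HxN).
  - intros t Ht. apply hh_der; lra.
  - intros t Ht. assert (Ht0 : 0 < t) by lra.
    rewrite (lnd t) by lra. rewrite (lnd (a*t)) by nra.
    assert (Hy1 : 0 < /t) by (apply Rinv_0_lt_compat; lra).
    assert (Hy12 : /t <= /(a*t)).
    { apply Rinv_le_contravar; nra. }
    assert (R := r_decr (/t) (/(a*t)) (conj Hy1 Hy12)).
    assert (E : ln (1 + / (a * t)) = /a * (/(a*t) * (ln (1 + / (a * t)) / / (a * t))) * a).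
    { field. nra. }
    assert (Hl : 0 <= ln (1 + /t)) by (assert (X := ln_lo1 (/t)); assert (0 <= /t/(1+/t)) by (apply Rdiv_le_0_compat; lra); lra).
    assert (R2 : /(a*t) * (ln (1 + / (a * t)) / / (a * t)) <= /(a*t) * (ln (1 + / t) / / t)).
    { apply Rmult_le_compat_l; [lra|exact R]. }
    assert (E2 : /(a*t) * (ln (1 + / t) / / t) = /a * ln (1 + /t)) by (field; nra).
    assert (E3 : a * ln (1 + / (a * t)) = /(a*t) * (ln (1 + / (a * t)) / / (a * t)) * a) by (field; nra).
    rewrite E3. rewrite E2 in R2.
    assert (R3 : /(a*t) * (ln (1 + / (a * t)) / / (a * t)) * a <= /a * ln (1 + /t) * a) by (apply Rmult_le_compat_r; lra).
    assert (E5 : /a * ln (1 + /t) * a = ln (1 + /t)) by (field; lra).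
    lra.
Qed.

Lemma diff_eq (gf : R -> R) eta NS lambda :
  EA_capacity gf eta NS - tradeoff_rate gf eta NS lambda
  = (gf NS - gf ((1-eta)*NS)) - (gf (lambda*NS) - gf ((1-eta)*(lambda*NS))).
Proof. unfold EA_capacity, tradeoff_rate. rewrite Rmult_assoc. ring. Qed.

Lemma both eta NS lambda :
      0 <= eta < 1 -> 0 < NS -> 0 < lambda <= 1 ->
      2 <= lambda * (1 - eta) * NS ->
      0 <= EA_capacity g eta NS - tradeoff_rate g eta NS lambda
        <= 5 / (6 * lambda * NS * (1 - eta)).
Proof.
  intros He HN Hl H2.
  rewrite diff_eq.
  set (a := 1 - eta). set (x := lambda * NS). fold a in H2.
  assert (Ha : 0 < a <= 1) by (unfold a; lra).
  assert (Hax : 2 <= a * x) by (unfold x; nra).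
  assert (Hx : 2 <= x) by nra.
  assert (HxN : x <= NS) by (unfold x; nra).
  assert (U := core_up a x NS Ha Hax HxN).
  assert (L := core_lo a x NS Ha ltac:(lra) HxN).
  unfold hh in U, L.
  assert (E : 6 * lambda * NS * a = 6 * a * x) by (unfold x; ring).
  rewrite E.
  assert (I1 : /(6*x^2) <= /(3*a*x)) by (apply Rinv_le_contravar; nra).
  assert (E2 : 5/(6*a*x) = /(2*a*x) + /(3*a*x)) by (field; nra).
  lra.
Qed.

Lemma g2_eq y : g2 y = g y / ln 2.
Proof.
  assert (0 < ln 2) by (rewrite <- ln_1; apply ln_increasing; lra).
  unfold g2, log2, g. field. lra.
Qed.

Theorem proposition4 :
  (forall eta NS lambda : R,
      0 <= eta < 1 -> 0 < NS -> 0 < lambda <= 1 ->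
      2 <= lambda * (1 - eta) * NS ->
      EA_capacity g eta NS - tradeoff_rate g eta NS lambda
        <= 5 / (6 * lambda * NS * (1 - eta)))
  /\
  (forall eta NS eps : R,
      0 <= eta < 1 -> 0 < NS -> 0 < eps ->
      let lambda := 5 / (6 * eps * NS * (1 - eta) * ln 2) in
      lambda <= 1 ->
      2 <= lambda * (1 - eta) * NS ->
      Rabs (EA_capacity g2 eta NS - tradeoff_rate g2 eta NS lambda) <= eps).
Proof.
  split.
  - intros. apply both; auto.
  - intros eta NS eps He HN Heps lambda Hl1 H2.
    assert (Hln : 0 < ln 2) by (rewrite <- ln_1; apply ln_increasing; lra).
    assert (Hlp : 0 < lambda).
    { unfold lambda. apply Rdiv_lt_0_compat; [lra|].
      repeat apply Rmult_lt_0_compat; lra. }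
    assert (B := both eta NS lambda He HN (conj Hlp Hl1) H2).
    assert (E : EA_capacity g2 eta NS - tradeoff_rate g2 eta NS lambda
      = (EA_capacity g eta NS - tradeoff_rate g eta NS lambda) / ln 2).
    { unfold EA_capacity, tradeoff_rate. rewrite !g2_eq. field. lra. }
    assert (E2 : 5 / (6 * lambda * NS * (1 - eta)) = eps * ln 2).
    { unfold lambda. field. repeat split; lra. }
    rewrite E2 in B. rewrite E.
    set (D := EA_capacity g eta NS - tradeoff_rate g eta NS lambda) in *.
    rewrite Rabs_pos_eq by (apply Rdiv_le_0_compat; lra).
    apply (Rmult_le_reg_r (ln 2)); [lra|].
    replace (D / ln 2 * ln 2) with D by (field; lra). lra.
Qed.
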